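(* Let $p$ be an odd prime. If $g\in G$ is a non-identity element of finite order, then $g$ has fewer than $p$ fixed points on $M(\mathbb{F}_p)$.
   Context: $M(\mathbb{F}_p)$ denotes the set of triples $(x,y,z)\in\mathbb{F}_p^3\setminus\{(0,0,0)\}$ satisfying $x^2+y^2+z^2=xyz$. The Markoff moves are the maps $m_1(x,y,z)=(yz-x,y,z)$, $m_2(x,y,z)=(x,xz-y,z)$, $m_3(x,y,z)=(x,y,xy-z)$ on $M(\mathbb{F}_p)$. Let $G=\mathbb{Z}/2*\mathbb{Z}/2*\mathbb{Z}/2$ be the free product with generators $m_1,m_2,m_3$; it acts on $M(\mathbb{F}_p)$ with $m_i$ acting by the $i$-th Markoff move. *)

(* Defs.v *)
From HB Require Import structures.
From mathcomp Require Import all_boot all_order all_algebra.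
Set Implicit Arguments. Unset Strict Implicit. Unset Printing Implicit Defensive.
Import GRing.Theory.
Local Open Scope ring_scope.

Definition triple (p : nat) := ('F_p * 'F_p * 'F_p)%type.

Definition markoff (p : nat) : {set triple p} :=
  [set t : triple p | let: (x, y, z) := t in
     (t != (0, 0, 0)) && (x ^+ 2 + y ^+ 2 + z ^+ 2 == x * y * z)].

(* The Markoff moves m_1, m_2, m_3 (indexed by 'I_3 = {0,1,2}). *)
Definition mmove (p : nat) (i : 'I_3) (t : triple p) : triple p :=
  let: (x, y, z) := t in
  match val i with
  | 0 => (y * z - x, y, z)
  | 1 => (x, x * z - y, z)
  | _ => (x, y, x * y - z)
  end.

(* The group G = Z/2 * Z/2 * Z/2 with generators m_1, m_2, m_3 is modelled by
   its normal form: reduced words over the letters 'I_3, i.e. words with no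
   two equal adjacent letters.  The word [:: i1; ...; ik] denotes
   m_{i1} m_{i2} ... m_{ik}. *)
Definition reduced (w : seq 'I_3) : bool := sorted (fun a b => a != b) w.

Definition push (a : 'I_3) (w : seq 'I_3) : seq 'I_3 :=
  if w is b :: w' then (if a == b then w' else a :: w) else [:: a].

Definition reduce (w : seq 'I_3) : seq 'I_3 := foldr push [::] w.

Definition gmul (g h : seq 'I_3) : seq 'I_3 := reduce (g ++ h).
Definition gone : seq 'I_3 := [::].
Definition gpow (g : seq 'I_3) (n : nat) : seq 'I_3 := iter n (gmul g) gone.

Definition finite_order (g : seq 'I_3) : Prop :=
  exists n : nat, (0 < n)%N /\ gpow g n = gone.

Definition gact (p : nat) (g : seq 'I_3) (t : triple p) : triple p :=
  foldr (fun i u => mmove i u) t g.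

Definition fixed_points (p : nat) (g : seq 'I_3) : {set triple p} :=
  [set t in markoff p | gact g t == t].

(* Main.v *)
Require Import Defs.
From HB Require Import structures.
From mathcomp Require Import all_boot all_order all_algebra.
Set Implicit Arguments. Unset Strict Implicit. Unset Printing Implicit Defensive.

Definition bnd (a b : seq 'I_3) : bool :=
  if a is x :: a' then (if b is y :: _ then last x a' != y else true) else true.

Lemma red_cat a b : reduced (a ++ b) = [&& reduced a, reduced b & bnd a b].
Proof.
case: a => [|x a] /=; first by rewrite andbT.
case: b => [|y b] /=; first by rewrite cats0 andbT.
rewrite /reduced /= cat_path /=.
by rewrite (andbC (last _ _ != _)).
Qed.

Lemma bnd_catr a b e : b != [::] -> bnd a (b ++ e) = bnd a b.
Proof. by case: a => // x a; case: b. Qed.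

Lemma bnd_catl a b e : b != [::] -> bnd (a ++ b) e = bnd b e.
Proof.
case: b => // y b _; case: a => // x a; case: e => // z e.
by rewrite /= last_cat.
Qed.

Lemma push_cat c y : reduced (c ++ y) -> foldr push y c = c ++ y.
Proof.
elim: c => // a c IH /= H.
have Hc : reduced (c ++ y) by move: H; rewrite /reduced /=; apply: path_sorted.
rewrite IH //; move: H; rewrite /push.
case Ecy: (c ++ y) => [|b s] //.
by rewrite /reduced /= => /andP[/negbTE -> _].
Qed.

Lemma push_cancel w y : foldr push (w ++ y) (rev w) = y.
Proof.
elim: w => //= a w IH.
by rewrite rev_cons -cats1 foldr_cat /= eqxx.
Qed.

Lemma reduce_red w : reduced w -> reduce w = w.
Proof. by move=> H; rewrite /reduce push_cat cats0 // cats0. Qed.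

Lemma reduce_cat g h : reduce (g ++ h) = foldr push (reduce h) g.
Proof. by rewrite /reduce foldr_cat. Qed.

Lemma decomp g : reduced g -> g != [::] ->
  exists w c, [/\ g = w ++ c ++ rev w, c != [::] & (size c == 1)%N || (head ord0 c != last ord0 c)].
Proof.
move: {2}(size g) (leqnn (size g)) => n; elim: n g => [|n IH] g.
  by rewrite leqn0 size_eq0 => /eqP ->.
case: g => // x g' Hs Hr _.
case/lastP: g' Hs Hr => [|m y] Hs Hr.
  by exists [::], [:: x].
case: (eqVneq x y) => [Exy|Nxy]; last first.
  exists [::], (x :: rcons m y); split; first by rewrite /= cats0. done.
  by rewrite /= last_rcons Nxy orbT.
subst y.
case: m Hs Hr => [|z m] Hs Hr.
  by move: Hr; rewrite /reduced /= eqxx.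
have Hm : reduced (z :: m).
  move: Hr; rewrite /reduced /= -cats1 cat_path => /andP[_ /andP[H _]]; exact: H.
have [|w [c [E Hc Hcc]]] := IH (z :: m) _ Hm isT.
  by move: Hs; rewrite /= size_rcons !ltnS; apply: leq_trans.
exists (x :: w), c; split => //.
by rewrite rev_cons -!cats1 E /= -!catA.
Qed.

Lemma bnd_ht c d : c != [::] -> d != [::] -> bnd c d = (last ord0 c != head ord0 d).
Proof. by case: c => // x c; case: d. Qed.

Section Pow.
Variables (w c : seq 'I_3).
Hypotheses (Hg : reduced (w ++ c ++ rev w)) (Hc : c != [::])
  (Hcc : head ord0 c != last ord0 c).

Definition Q d := [/\ d != [::], reduced (w ++ d ++ rev w),
   head ord0 d = head ord0 c & last ord0 d = last ord0 c].

Lemma Q_step d : Q d -> reduced (w ++ (c ++ d) ++ rev w) /\ Q (c ++ d).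
Proof.
case=> Hd Rd Hh Hl.
have R : reduced (w ++ (c ++ d) ++ rev w).
  move: Hg Rd; rewrite -catA !red_cat => /and3P[-> /and3P[-> -> Bc] Bw] /and3P[_ /and3P[-> _ ->] _].
  rewrite (bnd_catr _ _ Hd) (bnd_ht Hc Hd) Hh eq_sym Hcc /=.
  by move: Bw; rewrite !bnd_catr.
split=> //; split => //.
- by case: c Hc.
- by case: c Hc.
- by rewrite -Hl; clear -Hd; case: d Hd => // y d _; rewrite last_cat.
Qed.

Lemma gpow_form n : exists d, gpow (w ++ c ++ rev w) n.+1 = w ++ d ++ rev w /\ Q d.
Proof.
elim: n => [|n [d [E Qd]]].
  exists c; split; last by split.
  by rewrite /gpow /= /gmul cats0 reduce_red.
exists (c ++ d); have [R Qcd] := Q_step Qd; split => //.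
rewrite /gpow iterS -/(gpow _ n.+1) E /gmul reduce_cat reduce_red; last by case: Qd.
rewrite foldr_cat foldr_cat push_cancel.
rewrite (push_cat (c := c)); last by move: R; rewrite -catA red_cat => /and3P[_ ->].
rewrite -catA in R; rewrite (push_cat (c := w)) -?catA //.
Qed.
End Pow.

Lemma fin_order_form g : reduced g -> g != [::] -> finite_order g ->
  exists w i, g = w ++ [:: i] ++ rev w.
Proof.
move=> Hr Hne [n [Hn Hp]].
have [w [c [E Hc Hcc]]] := decomp Hr Hne.
case/orP: Hcc => [Hs|Hcc].
  case: c Hs E {Hc} => [|i [|]] // _ E; by exists w, i.
subst g; case: n Hn Hp => // n _.
have [d [E [Hd _ _ _]]] := gpow_form Hr Hc Hcc n.
by rewrite E => /(congr1 size); rewrite !size_cat; case: d Hd {E} => // ? ? _ /=; rewrite addnS.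
Qed.

From mathcomp Require Import ring.
Import GRing.Theory.
Local Open Scope ring_scope.
Section Curve.
Variable F : fieldType.
Hypothesis h2 : (2 : F) != 0.

Definition curve (y z : F) := y ^+ 2 * z ^+ 2 = 4 * (y ^+ 2 + z ^+ 2).
Definition phi (y z : F) := 2 * y / (z * (y + 2)).

Lemma h4 : (4 : F) != 0.
Proof. have -> : (4 : F) = 2 * 2 by ring. exact: mulf_neq0. Qed.

Lemma curve_z (y z : F) : curve y z -> y != 0 -> z != 0.
Proof.
move=> C hy; apply/eqP=> hz; move: C; rewrite /curve hz.
have -> : y ^+ 2 * 0 ^+ 2 = 0 :> F by ring.
have -> : 4 * (y ^+ 2 + 0 ^+ 2) = 4 * y ^+ 2 :> F by ring.
move/eqP; rewrite eq_sym mulf_eq0 (negbTE h4) /= expf_eq0 /= (negbTE hy).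
by [].
Qed.

Lemma curve_y2 (y z : F) : curve y z -> y + 2 != 0.
Proof.
move=> C; apply/eqP=> hy.
have hy' : y = - 2 by apply/eqP; rewrite -subr_eq0 opprK hy.
move: C; rewrite /curve hy' => /eqP.
rewrite -subr_eq0.
have -> : (-2) ^+ 2 * z ^+ 2 - 4 * ((-2) ^+ 2 + z ^+ 2) = - (4 * 4) :> F by ring.
by rewrite oppr_eq0 mulf_eq0 (negbTE h4).
Qed.

Lemma phi_neq0 (y z : F) : curve y z -> y != 0 -> phi y z != 0.
Proof.
move=> C hy; rewrite /phi mulf_neq0 ?mulf_neq0 ?invr_neq0 ?mulf_neq0 //.
  exact: curve_z C hy.
exact: curve_y2 C.
Qed.

Lemma phi_sq (y z : F) : curve y z -> y != 0 -> phi y z ^+ 2 * (y + 2) = y - 2.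
Proof.
move=> C hy; have hz := curve_z C hy; have hy2 := curve_y2 C.
have E : phi y z ^+ 2 * (y + 2) = (2 * y) ^+ 2 / (z ^+ 2 * (y + 2)).
  rewrite /phi; field; by rewrite ?hz ?hy2 ?mulf_neq0.
have E2 : (2 * y) ^+ 2 = (y - 2) * (z ^+ 2 * (y + 2)).
  apply/eqP; rewrite -subr_eq0; apply/eqP.
  have -> : (2 * y) ^+ 2 - (y - 2) * (z ^+ 2 * (y + 2)) =
     4 * (y ^+ 2 + z ^+ 2) - y ^+ 2 * z ^+ 2 by ring.
  by rewrite C subrr.
by rewrite E E2 mulfK // mulf_neq0 // expf_neq0.
Qed.

Lemma phi_mul (y z : F) : curve y z -> y != 0 -> phi y z * (z * (y + 2)) = 2 * y.
Proof.
move=> C hy; rewrite /phi divfK // mulf_neq0 //; [exact: curve_z C hy| exact: curve_y2 C].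
Qed.

Lemma phi_inj (y1 z1 y2 z2 : F) : curve y1 z1 -> curve y2 z2 -> y1 != 0 -> y2 != 0 ->
  phi y1 z1 = phi y2 z2 -> y1 = y2 /\ z1 = z2.
Proof.
move=> C1 C2 hy1 hy2 E.
have S1 := phi_sq C1 hy1; have S2 := phi_sq C2 hy2.
rewrite E in S1; set t := phi y2 z2 in S1 S2.
have Ey : y1 = y2.
  have H : (t ^+ 2 - 1) * (y1 - y2) = 0.
    have -> : (t ^+ 2 - 1) * (y1 - y2) = (t ^+ 2 * (y1 + 2) - (y1 - 2)) - (t ^+ 2 * (y2 + 2) - (y2 - 2)) by ring.
    by rewrite S1 S2 !subrr.
  move/eqP: H; rewrite mulf_eq0 => /orP[/eqP ht|]; last by rewrite subr_eq0 => /eqP.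
  have ht1 : t ^+ 2 = 1 by apply/eqP; rewrite -subr_eq0 ht.
  move: S1; rewrite ht1 => /eqP; rewrite -subr_eq0.
  have -> : 1 * (y1 + 2) - (y1 - 2) = 2 * 2 :> F by ring.
  by rewrite mulf_eq0 (negbTE h2).
split=> //; subst y2.
have M1 := phi_mul C1 hy1; have M2 := phi_mul C2 hy1.
rewrite E -M2 in M1.
have ht : t != 0 by exact: phi_neq0 C2 hy1.
have hy2' := curve_y2 C1.
have : t * (y1 + 2) * z1 = t * (y1 + 2) * z2.
  rewrite -!(mulrA t) ![(y1 + 2) * _]mulrC. exact M1.
by move/(mulfI (mulf_neq0 ht hy2')).
Qed.
End Curve.

Section Gen.
Variable F : fieldType.
Hypothesis h2 : (2 : F) != 0.

Lemma gen_curve (a b c : F) : a * b = c + c -> a ^+ 2 + b ^+ 2 + c ^+ 2 - a * b * c = 0 ->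
  (a = 0 -> b = 0 -> c = 0 -> False) -> curve a b /\ a != 0.
Proof.
move=> E M NZ.
have C : curve a b.
  apply/eqP; rewrite -subr_eq0; apply/eqP.
  have -> : a ^+ 2 * b ^+ 2 - 4 * (a ^+ 2 + b ^+ 2) =
    (a * b - (c + c)) ^+ 2 - 4 * (a ^+ 2 + b ^+ 2 + c ^+ 2 - a * b * c) by ring.
  by rewrite M E subrr expr0n /= mulr0 subrr.
split=> //; apply/eqP=> ha; apply: NZ => //.
  move: C; rewrite /curve ha => /eqP.
  have -> : 0 ^+ 2 * b ^+ 2 = 0 :> F by ring.
  rewrite eq_sym mulf_eq0 (negbTE (h4 h2)) /=.
  have -> : 0 ^+ 2 + b ^+ 2 = b ^+ 2 :> F by ring.
  by rewrite expf_eq0 /= => /eqP.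
have hb : b = 0.
  move: C; rewrite /curve ha => /eqP.
  have -> : 0 ^+ 2 * b ^+ 2 = 0 :> F by ring.
  rewrite eq_sym mulf_eq0 (negbTE (h4 h2)) /=.
  have -> : 0 ^+ 2 + b ^+ 2 = b ^+ 2 :> F by ring.
  by rewrite expf_eq0 /= => /eqP.
move: E; rewrite ha mul0r => /eqP; rewrite eq_sym.
have -> : c + c = 2 * c by ring.
by rewrite mulf_eq0 (negbTE h2) /= => /eqP.
Qed.

Lemma gen_mid (a b c1 c2 : F) : a * b = c1 + c1 -> a * b = c2 + c2 -> c1 = c2.
Proof.
move=> E1; rewrite E1 => /eqP; rewrite -subr_eq0.
have -> : c1 + c1 - (c2 + c2) = 2 * (c1 - c2) by ring.
by rewrite mulf_eq0 (negbTE h2) subr_eq0 => /eqP.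
Qed.
End Gen.

Section Act.
Variable p : nat.

Lemma mmoveK (i : 'I_3) (t : triple p) : mmove i (mmove i t) = t.
Proof.
case: t => [[x y] z]; case: i => [[|[|[|k]]] Hk] //=; congr (_, _, _); ring.
Qed.

Lemma mmove0 (i : 'I_3) : mmove i (0, 0, 0) = (0, 0, 0) :> triple p.
Proof. case: i => [[|[|[|k]]] Hk] //=; congr (_, _, _); ring. Qed.

Lemma gact_revK w (t : triple p) : gact (rev w) (gact w t) = t.
Proof.
elim: w t => //= a w IH t.
by rewrite rev_cons /gact foldr_rcons /= mmoveK -/(gact _ _) IH.
Qed.

Lemma gact_Krev w (t : triple p) : gact w (gact (rev w) t) = t.
Proof. by rewrite -{1}(revK w) gact_revK. Qed.

Lemma markoff_mmove (i : 'I_3) (t : triple p) : t \in markoff p -> mmove i t \in markoff p.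
Proof.
move=> H; move: (H); rewrite !inE.
have -> : (mmove i t != (0, 0, 0)) = (t != (0,0,0)).
  apply/negb_inj; rewrite !negbK; apply/eqP/eqP => [E|->]; last exact: mmove0.
  by rewrite -(mmoveK i t) E mmove0.
case: t {H} => [[x y] z] /andP[-> /eqP M] /=.
case: i => [[|[|[|k]]] Hk] //=; apply/eqP; apply/eqP; rewrite -subr_eq0; apply/eqP.
- have -> : (y * z - x) ^+ 2 + y ^+ 2 + z ^+ 2 - (y * z - x) * y * z =
     x ^+ 2 + y ^+ 2 + z ^+ 2 - x * y * z by ring.
  by rewrite M subrr.
- have -> : x ^+ 2 + (x * z - y) ^+ 2 + z ^+ 2 - x * (x * z - y) * z =
     x ^+ 2 + y ^+ 2 + z ^+ 2 - x * y * z by ring.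
  by rewrite M subrr.
- have -> : x ^+ 2 + y ^+ 2 + (x * y - z) ^+ 2 - x * y * (x * y - z) =
     x ^+ 2 + y ^+ 2 + z ^+ 2 - x * y * z by ring.
  by rewrite M subrr.
Qed.

Lemma markoff_gact w (t : triple p) : t \in markoff p -> gact w t \in markoff p.
Proof. by elim: w => //= a w IH H; apply: markoff_mmove; apply: IH. Qed.
End Act.

Definition keyf p (i : 'I_3) (t : triple p) : 'F_p :=
  let: (x, y, z) := t in
  match val i with 0 => phi y z | 1 => phi x z | _ => phi x y end.

Section Key.
Variable p : nat.
Hypotheses (Hp : prime p) (Hodd : odd p).

Lemma Fp2 : (2 : 'F_p) != 0.
Proof.
rewrite -(dvdn_pcharf (pchar_Fp Hp)).
apply/negP => /(dvdn_leq (isT : (0 < 2)%N)) H.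
have H1 := prime_gt1 Hp.
have : p = 2%N by apply/eqP; rewrite eqn_leq H H1.
by move=> E; move: Hodd; rewrite E.
Qed.

Lemma key_fix (i : 'I_3) (t1 t2 : triple p) :
  t1 \in markoff p -> mmove i t1 = t1 -> t2 \in markoff p -> mmove i t2 = t2 ->
  keyf i t1 != 0 /\ (keyf i t1 = keyf i t2 -> t1 = t2).
Proof.
have h2 := Fp2.
case: t1 => [[x1 y1] z1]; case: t2 => [[x2 y2] z2].
rewrite !inE !xpair_eqE.
move=> /andP[N1 /eqP M1] F1 /andP[N2 /eqP M2] F2.
have NZ : forall x y z : 'F_p, ~~ [&& x == 0, y == 0 & z == 0] ->
   (x = 0 -> y = 0 -> z = 0 -> False).
  by move=> x y z N hx hy hz; move: N; rewrite hx hy hz !eqxx.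
rewrite -!andbA in N1 N2.
have NZ1 := NZ _ _ _ N1; have NZ2 := NZ _ _ _ N2.
have MM : forall x y z : 'F_p, x ^+ 2 + y ^+ 2 + z ^+ 2 = x * y * z ->
  [/\ y ^+ 2 + z ^+ 2 + x ^+ 2 - y * z * x = 0,
      x ^+ 2 + z ^+ 2 + y ^+ 2 - x * z * y = 0 &
      x ^+ 2 + y ^+ 2 + z ^+ 2 - x * y * z = 0].
  move=> x y z M; split.
  - have -> : y ^+ 2 + z ^+ 2 + x ^+ 2 - y * z * x = x ^+ 2 + y ^+ 2 + z ^+ 2 - x * y * z by ring.
    by rewrite M subrr.
  - have -> : x ^+ 2 + z ^+ 2 + y ^+ 2 - x * z * y = x ^+ 2 + y ^+ 2 + z ^+ 2 - x * y * z by ring.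
    by rewrite M subrr.
  - by rewrite M subrr.
have [A1 B1 C1] := MM _ _ _ M1; have [A2 B2 C2] := MM _ _ _ M2.
move: F1 F2; case: i => [[|[|[|k]]] Hk] //= [E1] [E2]; rewrite /keyf /=.
- have E1' : y1 * z1 = x1 + x1 by rewrite -{1}E1 subrK.
  have E2' : y2 * z2 = x2 + x2 by rewrite -{1}E2 subrK.
  have [Cu1 Nu1] := gen_curve h2 E1' A1 (fun a b c => NZ1 c a b).
  have [Cu2 Nu2] := gen_curve h2 E2' A2 (fun a b c => NZ2 c a b).
  split; first exact: phi_neq0.
  move=> /(phi_inj h2 Cu1 Cu2 Nu1 Nu2) [ey ez]; subst y2 z2.
  by rewrite (gen_mid h2 E1' E2').
- have E1' : x1 * z1 = y1 + y1 by rewrite -{1}E1 subrK.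
  have E2' : x2 * z2 = y2 + y2 by rewrite -{1}E2 subrK.
  have [Cu1 Nu1] := gen_curve h2 E1' B1 (fun a b c => NZ1 a c b).
  have [Cu2 Nu2] := gen_curve h2 E2' B2 (fun a b c => NZ2 a c b).
  split; first exact: phi_neq0.
  move=> /(phi_inj h2 Cu1 Cu2 Nu1 Nu2) [ey ez]; subst x2 z2.
  by rewrite (gen_mid h2 E1' E2').
- have E1' : x1 * y1 = z1 + z1 by rewrite -{1}E1 subrK.
  have E2' : x2 * y2 = z2 + z2 by rewrite -{1}E2 subrK.
  have [Cu1 Nu1] := gen_curve h2 E1' C1 (fun a b c => NZ1 a b c).
  have [Cu2 Nu2] := gen_curve h2 E2' C2 (fun a b c => NZ2 a b c).
  split; first exact: phi_neq0.
  move=> /(phi_inj h2 Cu1 Cu2 Nu1 Nu2) [ey ez]; subst x2 y2.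
  by rewrite (gen_mid h2 E1' E2').
Qed.
End Key.

Theorem lemma6p4 (p : nat) (Hp : prime p) (Hodd : odd p) (g : seq 'I_3) :
  reduced g -> g <> gone -> finite_order g ->
  (#|fixed_points p g| < p)%N.
Proof.
move=> Hr Hne Hfo.
have [w [i E]] := fin_order_form Hr (introN eqP Hne : g != [::]) Hfo.
pose H := fun t : triple p => keyf i (gact (rev w) t).
have Fix : forall t, t \in fixed_points p g ->
    gact (rev w) t \in markoff p /\ mmove i (gact (rev w) t) = gact (rev w) t.
  move=> t; rewrite inE => /andP[Ht /eqP Gt]; split; first exact: markoff_gact.
  move: Gt; rewrite E /gact !foldr_cat /= -/(gact _ _) -/(gact _ _) => Gt.
  by rewrite -{2}Gt gact_revK.
have Hinj : {in fixed_points p g &, injective H}.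
  move=> t1 t2 /Fix [M1 F1] /Fix [M2 F2] /=; rewrite /H => Ek.
  have [_ Inj] := key_fix Hp Hodd M1 F1 M2 F2.
  by rewrite -(gact_Krev w t1) Inj // gact_Krev.
rewrite -(card_in_imset Hinj).
have Sub : [set H x | x in fixed_points p g] \subset [set~ (0 : 'F_p)].
  apply/subsetP => _ /imsetP [t Ht ->]; rewrite !inE.
  have [M F] := Fix t Ht.
  by have [-> _] := key_fix Hp Hodd M F M F.
apply: (leq_ltn_trans (subset_leq_card Sub)).
by rewrite cardsC1 card_Fp // prednK ?prime_gt0.
Qed.
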